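(* Let $\kappa$ be an uncountable regular cardinal and let $\mathcal{I}$ be a $\kappa$-complete proper ideal on $\kappa$ containing every bounded subset of $\kappa$, and suppose $\mathcal{I}$ contains an unbounded subset of $\kappa$. Let $\nu\in\{2,\kappa\}$. Then every subset of ${}^{\kappa}\nu$ is $\mathcal{I}$-analytic.
   Context: Work in ZFC. For $\mu\in\{2,\kappa\}$, ${}^{\kappa}\mu$ is the set of functions $\kappa\to\mu$. For $f\colon D\to\mu$ with $D\in\mathcal{I}$ let $\mathbf{N}_f=\{x\in{}^{\kappa}\mu: f\subseteq x\}$; the $\mathcal{I}$-topology $\tau_{\mathcal{I}}$ on ${}^{\kappa}\mu$ is generated by these sets. A function ${}^{\kappa}\kappa\to{}^{\kappa}\nu$ is $\mathcal{I}$-continuous if it is continuous when both spaces carry $\tau_{\mathcal{I}}$. A set $A\subseteq{}^{\kappa}\nu$ is $\mathcal{I}$-analytic if either $A=\emptyset$ or there are a $\tau_{\mathcal{I}}$-closed set $C\subseteq{}^{\kappa}\kappa$ and an $\mathcal{I}$-continuous function $\Phi\colon{}^{\kappa}\kappa\to{}^{\kappa}\nu$ with $\Phi(C)=A$. *)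

(* Defs.v *)
From Stdlib Require Import Classical.

(* The cardinal kappa is represented by a type [K] with a strict well-order
   [lt] whose order type is an initial ordinal. *)

Definition injective {A B : Type} (f : A -> B) : Prop :=
  forall x y, f x = f y -> x = y.

Definition strict_well_order {K : Type} (lt : K -> K -> Prop) : Prop :=
  (forall a, ~ lt a a) /\
  (forall a b c, lt a b -> lt b c -> lt a c) /\
  (forall a b, lt a b \/ a = b \/ lt b a) /\
  well_founded lt.

(* |A| < |K| for A a subset of K: K does not inject into A. *)
Definition small {K : Type} (A : K -> Prop) : Prop :=
  ~ exists f : K -> K, (forall x, A (f x)) /\ injective f.

Definition bounded {K : Type} (lt : K -> K -> Prop) (A : K -> Prop) : Prop :=
  exists a, forall b, A b -> lt b a.

Definition uncountable_regular_cardinal {K : Type} (lt : K -> K -> Prop) : Prop :=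
  strict_well_order lt /\
  (* initial ordinal: every proper initial segment has smaller cardinality *)
  (forall a, small (fun b => lt b a)) /\
  (~ exists f : K -> nat, injective f) /\
  (forall A : K -> Prop, small A -> bounded lt A).

Definition kappa_complete_proper_ideal {K : Type} (lt : K -> K -> Prop)
  (I : (K -> Prop) -> Prop) : Prop :=
  I (fun _ => False) /\
  (forall A B : K -> Prop, I A -> (forall x, B x -> A x) -> I B) /\
  (forall A B : K -> Prop, I A -> I B -> I (fun x => A x \/ B x)) /\
  ~ I (fun _ => True) /\
  (* kappa-complete: unions of fewer than kappa members (families indexed
     by a subset J of kappa with |J| < kappa) *)
  (forall (J : K -> Prop) (F : K -> K -> Prop),
      small J -> (forall j, J j -> I (F j)) ->
      I (fun x => exists j, J j /\ F j x)) /\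
  (forall A : K -> Prop, bounded lt A -> I A).

(* Basic open set N_f for f = x|D, D in I. *)
Definition basic_nbhd {K Y : Type} (D : K -> Prop) (x : K -> Y) : (K -> Y) -> Prop :=
  fun z => forall a, D a -> z a = x a.

(* I-topology on ^kappa Y: the topology generated by the N_f, f : D -> Y,
   D in I.  Since these sets are closed under finite intersections (I is
   closed under finite unions) they form a base, so U is open iff each
   point of U has a basic neighbourhood inside U. *)
Definition I_open {K Y : Type} (I : (K -> Prop) -> Prop) (U : (K -> Y) -> Prop) : Prop :=
  forall x, U x -> exists D, I D /\ forall z, basic_nbhd D x z -> U z.

Definition I_closed {K Y : Type} (I : (K -> Prop) -> Prop) (C : (K -> Y) -> Prop) : Prop :=
  I_open I (fun z => ~ C z).

Definition I_continuous {K Y : Type} (I : (K -> Prop) -> Prop)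
  (Phi : (K -> K) -> (K -> Y)) : Prop :=
  forall U : (K -> Y) -> Prop, I_open I U -> I_open I (fun x => U (Phi x)).

Definition I_analytic {K Y : Type} (I : (K -> Prop) -> Prop) (A : (K -> Y) -> Prop) : Prop :=
  (forall y, ~ A y) \/
  exists (C : (K -> K) -> Prop) (Phi : (K -> K) -> (K -> Y)),
    I_closed I C /\ I_continuous I Phi /\
    (forall y, A y <-> exists x, C x /\ Phi x = y).

(* Main.v *)
Require Import Defs.
From Stdlib Require Import Classical ClassicalEpsilon FunctionalExtensionality.

Lemma main_lemma (K Y : Type) (I : (K -> Prop) -> Prop) (A0 : K -> Prop)
  (e : K -> K) (He : forall k, A0 (e k)) (Hinj : injective e)
  (r : K -> Y) (Hr : forall y, exists k, r k = y) (inhK : inhabited K) :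
  I A0 -> forall A : (K -> Y) -> Prop, I_analytic I A.
Proof.
  intros HI A.
  destruct (classic (exists a, A a)) as [[a0 Ha0]|Hn].
  2:{ left. intros y Hy. apply Hn. eauto. }
  right.
  set (g := fun x : K -> K => fun k => r (x (e k))).
  exists (fun _ => True).
  exists (fun x => if excluded_middle_informative (A (g x)) then g x else a0).
  split; [|split].
  - intros x Hx. exfalso. apply Hx. exact Logic.I.
  - intros U HU x Hx. exists A0. split; [exact HI|].
    intros z Hz.
    assert (Hg : g z = g x).
    { unfold g. extensionality k. rewrite (Hz (e k) (He k)). reflexivity. }
    rewrite Hg. exact Hx.
  - intros y. split.
    + intros Hy.
      pose (x := fun j => epsilon inhK (fun k0 => r k0 = y (epsilon inhK (fun k => e k = j)))).
      assert (Hgx : g x = y).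
      { unfold g. extensionality k. unfold x.
        assert (E : epsilon inhK (fun k1 => e k1 = e k) = k).
        { apply Hinj. apply (epsilon_spec inhK (fun k1 => e k1 = e k)). eauto. }
        rewrite E.
        apply (epsilon_spec inhK (fun k0 => r k0 = y k)). apply Hr. }
      exists x. split; [exact Logic.I|].
      destruct (excluded_middle_informative (A (g x))) as [H|H].
      * exact Hgx.
      * rewrite Hgx in H. contradiction.
    + intros [x [_ Hx]]. subst y.
      destruct (excluded_middle_informative (A (g x))); assumption.
Qed.

Theorem corollary5p3 (K : Type) (lt : K -> K -> Prop) (I : (K -> Prop) -> Prop)
  (Y : Type) :
  uncountable_regular_cardinal lt ->
  kappa_complete_proper_ideal lt I ->
  (exists A : K -> Prop, I A /\ ~ bounded lt A) ->
  (Y = bool \/ Y = K) ->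
  forall A : (K -> Y) -> Prop, I_analytic I A.
Proof.
  intros [_ [_ [Hunc Hreg]]] _ [A0 [HIA0 Hunb]] HY.
  assert (Hns : ~ small A0) by (intro Hs; apply Hunb; apply Hreg; exact Hs).
  unfold small in Hns. apply NNPP in Hns. destruct Hns as [e [He Hinj]].
  assert (inhK : inhabited K).
  { apply NNPP. intro Hn. apply Hunc. exists (fun _ => 0).
    intros x. exfalso. apply Hn. exact (inhabits x). }
  destruct inhK as [k0].
  assert (Hk1 : exists k1, k1 <> k0).
  { apply NNPP. intro Hn. apply Hunc. exists (fun _ => 0).
    intros x y _. 
    assert (x = k0) by (apply NNPP; intro; apply Hn; eauto).
    assert (y = k0) by (apply NNPP; intro; apply Hn; eauto). congruence. }
  destruct Hk1 as [k1 Hk1].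
  destruct HY as [HY|HY]; subst Y.
  - apply (main_lemma K bool I A0 e He Hinj
      (fun k => if excluded_middle_informative (k = k0) then true else false)).
    + intros b. destruct b.
      * exists k0. destruct (excluded_middle_informative (k0 = k0)); congruence.
      * exists k1. destruct (excluded_middle_informative (k1 = k0)); congruence.
    + exact (inhabits k0).
    + exact HIA0.
  - apply (main_lemma K K I A0 e He Hinj (fun k => k)).
    + intros y; exists y; reflexivity.
    + exact (inhabits k0).
    + exact HIA0.
Qed.
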